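(* Assume the linear setting below. For every integer $k\ge0$, \[ \min\left\{b_{\varepsilon s^k+s^k-1}:\ \varepsilon\in\{1,\dots,s-1\}\right\}=b_{s^{k+1}-1}, \] i.e. among the integers with base-$s$ digits $\varepsilon\,(s-1)^k$, $\varepsilon\ne0$, the value of $b$ is minimal for $\varepsilon=s-1$. In particular $b_{s-1}\le b_{s-2}\le\cdots\le b_1$.
   Context: Linear setting: integers $q\ge2$, $r\in\{0,1,\dots,q-1\}$, $p>q+r$; $A=\{d\in\{0,1,\dots,p-1\}: d\equiv r\pmod q\}$, $s=\#A\ge2$, and $h(i)=qi+r$ for $0\le i\le s-1$. For a positive integer $n$ with base-$s$ expansion $n=\sum_{i=0}^k\varepsilon_i s^i$ ($\varepsilon_k\ne0$), $a_n=\sum_{i=0}^k h(\varepsilon_i)p^i$ and $b_n=a_n/n^{\log_s p}$. *)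

(* Defs.v *)
From mathcomp Require Import all_boot.
From Stdlib Require Import Reals.
Set Implicit Arguments. Unset Strict Implicit. Unset Printing Implicit Defensive.

Definition sA (q r p : nat) : nat := count (fun d => d %% q == r) (iota 0 p).

Definition hh (q r i : nat) : nat := q * i + r.

Definition digit (s n i : nat) : nat := (n %/ s ^ i) %% s.

Definition a_seq (q r p n : nat) : nat :=
  let s := sA q r p in
  \sum_(i < (trunc_log s n).+1) hh q r (digit s n i) * p ^ i.

Definition b_seq (q r p n : nat) : R :=
  (INR (a_seq q r p n) /
   Rpower (INR n) (ln (INR p) / ln (INR (sA q r p))))%R.

(* Main.v *)
Require Import Defs.
From mathcomp Require Import all_boot zify.
From Stdlib Require Import Reals Lra Psatz Lia.

Lemma sA_S q r p : sA q r p.+1 = sA q r p + (p %% q == r).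
Proof. by rewrite /sA -addn1 iotaD count_cat /= addn0. Qed.

Lemma sA_inv q r p : 0 < q -> r < q ->
  (sA q r p = 0 /\ p <= r) \/
  (1 <= sA q r p /\ q * (sA q r p - 1) + r < p /\ p <= q * sA q r p + r).
Proof.
move=> q0 rq; elim: p => [|p IH]; first by left.
rewrite sA_S; move: IH; set s := sA q r p => IH.
have Hm : (q * s + r) %% q = r by rewrite mulnC modnMDl modn_small.
case: IH => [[-> pr]|[h1 [h2 h3]]].
- case: eqP => [pm|pm].
  + right; have pe : p = r by rewrite -pm modn_small //; lia.
    subst; lia.
  + left; split=> //. have : p != r.
      by apply/eqP=> e; apply: pm; rewrite e modn_small.
    lia.
- case: eqP => [pm|pm].
  + right. have pe : p = q * s + r.
      have [d Hd] : exists d, p = d * q + r by exists (p %/ q); rewrite {1}(divn_eq p q) pm.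
      rewrite Hd in h2 h3 *. have e1 : d * q <= s * q by lia.
      have e2 : (s - 1) * q < d * q by lia.
      rewrite leq_pmul2r // in e1. rewrite ltn_pmul2r // in e2.
      have -> : d = s by lia. by rewrite mulnC.
    lia.
  + right. have : p != q * s + r by apply/eqP=> e; apply: pm; rewrite e.
    lia.
Qed.

Lemma sA_facts q r p : 2 <= q -> r < q -> q + r < p ->
  2 <= sA q r p /\ q * (sA q r p - 1) + r < p.
Proof.
move=> q2 rq qp. case: (@sA_inv q r p (ltnW q2) rq) => [[_ h]|[h1 [h2 h3]]]; first lia.
split=> //. have: 1 < sA q r p by nia. done.
Qed.
Lemma powE m n : Nat.pow m n = expn m n.
Proof. elim: n => [|n IH] //=; by rewrite expnS IH. Qed.

Definition nk s e k := e * s ^ k + s ^ k - 1.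

Lemma nk_S s e k : 1 <= s -> nk s e k.+1 = s * nk s e k + (s - 1).
Proof.
move=> s1; rewrite /nk !powE expnS. have : 1 <= expn s k by rewrite expn_gt0 s1.
move: (expn s k) => X X1. nia.
Qed.

Lemma digit0 s m d : d < s -> digit s (s * m + d) 0 = d.
Proof. by move=> ds; rewrite /digit !powE expn0 divn1 mulnC modnMDl modn_small. Qed.

Lemma digitS s m d i : d < s -> digit s (s * m + d) i.+1 = digit s m i.
Proof.
move=> ds; rewrite /digit !powE expnS divnMA mulnC divnMDl ?(divn_small ds) ?addn0 //.
by apply: leq_ltn_trans ds.
Qed.

Lemma tl s e k : 1 < s -> 1 <= e < s -> trunc_log s (nk s e k) = k.
Proof.
move=> s1 /andP[e1 es]; apply: trunc_log_eq => //.
rewrite /nk !powE expnS. have : 1 <= expn s k by rewrite expn_gt0; lia.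
move: (expn s k) => X X1. apply/andP; split; nia.
Qed.

Definition T q r p s e k :=
  \sum_(i < k.+1) hh q r (digit s (nk s e k) i) * p ^ i.

Lemma T0 q r p s e : e < s -> T q r p s e 0 = hh q r e.
Proof.
move=> es; rewrite /T big_ord_recr big_ord0 /= add0n /nk addnK /digit powE expn0 divn1 modn_small ?muln1 //.
Qed.

Lemma TS q r p s e k : 1 < s ->
  T q r p s e k.+1 = hh q r (s - 1) + p * T q r p s e k.
Proof.
move=> s1; rewrite /T big_ord_recl /= nk_S; last lia.
rewrite digit0; last lia. rewrite muln1; congr (_ + _).
rewrite big_distrr /=; apply: eq_bigr => i _.
rewrite /bump /= digitS; last lia. by rewrite mulnCA.
Qed.

Lemma arithT p' t H he P : p' * t + H = p' * he * P + H * P ->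
  p' * (H + p'.+1 * t) + H = p' * he * (p'.+1 * P) + H * (p'.+1 * P).
Proof.
move=> E.
have -> : p' * (H + p'.+1 * t) + H = p'.+1 * (p' * t + H) by nia.
rewrite E; nia.
Qed.

Lemma Tclosed q r p s e k : 1 < s -> e < s -> 1 <= p ->
  (p - 1) * T q r p s e k + hh q r (s - 1)
  = (p - 1) * hh q r e * p ^ k + hh q r (s - 1) * p ^ k.
Proof.
move=> s1 es p1; elim: k => [|k IH]; first by rewrite T0 // !powE !expn0 !muln1.
rewrite TS // !powE !expnS. rewrite !powE in IH.
case: p p1 IH => // p' _; rewrite subSS subn0 => IH.
exact: arithT.
Qed.

Section RealPart.
Open Scope R_scope.
Lemma rpow_1l a : Rpower 1 a = 1.
Proof. unfold Rpower; rewrite ln_1 Rmult_0_r; apply exp_0. Qed.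

Lemma rpow_pos x a : 0 < Rpower x a.
Proof. unfold Rpower; apply exp_pos. Qed.

Lemma rpow_ge1 x a : 1 <= x -> 0 <= a -> 1 <= Rpower x a.
Proof.
intros Hx Ha; rewrite -(rpow_1l a); apply Rle_Rpower_l; lra.
Qed.

Lemma rpow_le1 x a : 0 < x <= 1 -> 0 <= a -> Rpower x a <= 1.
Proof.
intros Hx Ha; rewrite -(rpow_1l a); apply Rle_Rpower_l; lra.
Qed.

Lemma bern a x : 1 <= a -> 0 < x -> 1 + a * (x - 1) <= Rpower x a.
Proof.
intros Ha Hx. destruct (Rtotal_order x 1) as [Hlt|[Heq|Hgt]].
- destruct (MVT_cor2 (fun y => Rpower y a) (fun y => a * Rpower y (a-1)) x 1 Hlt)
    as [c [Hc1 Hc2]].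
  { intros c Hc; apply derivable_pt_lim_power; lra. }
  rewrite rpow_1l in Hc1.
  assert (C := rpow_le1 c (a-1) ltac:(lra) ltac:(lra)).
  assert (a * Rpower c (a - 1) * (1 - x) <= a * (1 - x)).
  { rewrite Rmult_assoc. apply Rmult_le_compat_l; [lra|]. nra. }
  lra.
- rewrite Heq rpow_1l; lra.
- destruct (MVT_cor2 (fun y => Rpower y a) (fun y => a * Rpower y (a-1)) 1 x Hgt)
    as [c [Hc1 Hc2]].
  { intros c Hc; apply derivable_pt_lim_power; lra. }
  rewrite rpow_1l in Hc1.
  assert (C := rpow_ge1 c (a-1) ltac:(lra) ltac:(lra)).
  assert (a * (x - 1) <= a * Rpower c (a - 1) * (x - 1)).
  { rewrite Rmult_assoc. apply Rmult_le_compat_l; [lra|]. nra. }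
  lra.
Qed.

Lemma tangent a z w : 1 <= a -> 0 < z -> 0 < w ->
  Rpower z a + (a * Rpower z a / z) * (w - z) <= Rpower w a.
Proof.
intros Ha Hz Hw.
assert (B := bern a (w / z) Ha ltac:(apply Rdiv_lt_0_compat; lra)).
assert (E : Rpower (w / z) a * Rpower z a = Rpower w a).
{ rewrite Rpower_mult_distr; [|apply Rdiv_lt_0_compat; lra|lra].
  f_equal; field; lra. }
assert (Z := rpow_pos z a).
apply Rmult_le_compat_r with (r := Rpower z a) in B; [|lra].
rewrite E in B.
replace (Rpower z a + a * Rpower z a / z * (w - z))
  with ((1 + a * (w / z - 1)) * Rpower z a) by (field; lra).
exact B.
Qed.

Lemma rpow_convex a x y m : 1 <= a -> 0 < x -> 0 < y -> 0 <= m <= 1 ->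
  Rpower ((1 - m) * x + m * y) a <= (1 - m) * Rpower x a + m * Rpower y a.
Proof.
intros Ha Hx Hy Hm.
set z := (1 - m) * x + m * y.
assert (Hz : 0 < z) by (unfold z; nra).
assert (T1 := tangent a z x Ha Hz Hx).
assert (T2 := tangent a z y Ha Hz Hy).
set Z := Rpower z a in T1 T2 *. set T := a * Z / z in T1 T2 *.
apply Rle_trans with ((1 - m) * (Z + T * (x - z)) + m * (Z + T * (y - z))).
- right. unfold z; ring.
- apply Rplus_le_compat; apply Rmult_le_compat_l; lra.
Qed.

Lemma div01 x D : 0 <= x <= D -> 0 < D -> 0 <= x / D <= 1.
Proof.
intros Hx HD. assert (I := Rinv_0_lt_compat D HD). unfold Rdiv. split.
- apply Rmult_le_pos; lra.
- rewrite -(Rinv_r D); [|lra]. apply Rmult_le_compat_r; lra.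
Qed.

Lemma kar a u b d : 1 <= a -> 0 < u -> u <= b -> 0 <= d ->
  Rpower b a + Rpower (u + d) a <= Rpower u a + Rpower (b + d) a.
Proof.
intros Ha Hu Hb Hd.
destruct (Req_dec (b - u + d) 0) as [H0|H0].
- assert (b = u) by lra. assert (d = 0) by lra. subst. lra.
- set D := b - u + d.
  assert (HD : 0 < D) by (unfold D; lra).
  assert (C1 := rpow_convex a u (b + d) ((b - u) / D) Ha Hu ltac:(lra)
     ltac:(apply div01; unfold D; lra)).
  assert (C2 := rpow_convex a u (b + d) (d / D) Ha Hu ltac:(lra)
     ltac:(apply div01; unfold D; lra)).
  replace ((1 - (b - u) / D) * u + (b - u) / D * (b + d)) with b in C1
    by (unfold D; field; lra).
  replace ((1 - d / D) * u + d / D * (b + d)) with (u + d) in C2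
    by (unfold D; field; lra).
  assert (E : d / D = 1 - (b - u) / D) by (unfold D; field; lra).
  rewrite E in C2.
  set m1 := (b - u) / D in C1 C2.
  set U := Rpower u a in C1 C2 *. set V := Rpower (b + d) a in C1 C2 *.
  assert (F : (1 - m1) * U + m1 * V + ((1 - (1 - m1)) * U + (1 - m1) * V) = U + V) by ring.
  lra.
Qed.
Lemma div_le A B X Y : 0 < X -> 0 < Y -> A * Y <= B * X -> A / X <= B / Y.
Proof.
intros HX HY H.
replace (A / X) with (A * Y * / (X * Y)) by (field; lra).
replace (B / Y) with (B * X * / (X * Y)) by (field; lra).
apply Rmult_le_compat_r; [left; apply Rinv_0_lt_compat; nra | exact H].
Qed.

Lemma Fmono a n m : 1 <= a -> 1 < n -> n <= m ->
  (Rpower m a - 1) * Rpower (n - 1) a <= (Rpower n a - 1) * Rpower (m - 1) a.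
Proof.
intros Ha Hn Hm.
set l := (n - 1) / (m - 1).
assert (Hl : 0 < l) by (apply Rdiv_lt_0_compat; lra).
assert (K := kar a l 1 (n - 1) Ha Hl ltac:(apply div01; lra) ltac:(lra)).
replace (l + (n - 1)) with (l * m) in K by (unfold l; field; lra).
replace (1 + (n - 1)) with n in K by ring.
rewrite -Rpower_mult_distr in K; [|lra|lra].
rewrite rpow_1l in K.
replace (n - 1) with (l * (m - 1)) by (unfold l; field; lra).
rewrite -Rpower_mult_distr; [|lra|lra].
set L := Rpower l a in K *. set M := Rpower m a in K *.
assert (R1 := rpow_pos (m - 1) a). set Q := Rpower (m - 1) a in R1 *.
assert (H : L * (M - 1) <= Rpower n a - 1) by lra.
replace ((M - 1) * (L * Q)) with ((L * (M - 1)) * Q) by ring.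
apply Rmult_le_compat_r; lra.
Qed.

Lemma chord a s t : 1 <= a -> 1 < s -> 1 <= t <= s ->
  Rpower t a <= 1 + (t - 1) * (Rpower s a - 1) / (s - 1).
Proof.
intros Ha Hs Ht.
assert (C := rpow_convex a 1 s ((t - 1) / (s - 1)) Ha ltac:(lra) ltac:(lra)
   ltac:(apply div01; lra)).
replace ((1 - (t - 1) / (s - 1)) * 1 + (t - 1) / (s - 1) * s) with t in C
  by (field; lra).
rewrite rpow_1l in C.
replace (1 + (t - 1) * (Rpower s a - 1) / (s - 1))
  with ((1 - (t - 1) / (s - 1)) * 1 + (t - 1) / (s - 1) * Rpower s a)
  by (field; lra).
exact C.
Qed.

Lemma main1 a s p q r c e S : 1 <= a -> 1 < s -> Rpower s a = p -> 1 <= S ->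
  1 <= e <= s - 1 -> 0 <= q -> 0 <= r -> 0 <= c -> c * (p - 1) = q * (s - 1) + r ->
  (Rpower S a * p * c - c) / Rpower (s * S - 1) a
  <= (Rpower S a * (q * e + r + c) - c) / Rpower ((e + 1) * S - 1) a.
Proof.
intros Ha Hs Hp HS He Hq Hr Hc Hcp.
assert (P0 := rpow_pos S a). set P := Rpower S a in P0 *.
assert (RNn : Rpower ((e + 1) * S) a = Rpower (e + 1) a * P).
{ rewrite -Rpower_mult_distr; [reflexivity|lra|lra]. }
assert (RNm : Rpower (s * S) a = p * P).
{ rewrite -Rpower_mult_distr; [rewrite Hp; reflexivity|lra|lra]. }
assert (ch := chord a s (e + 1) Ha Hs ltac:(lra)).
rewrite Hp in ch.
assert (K1 : c * Rpower (e + 1) a <= q * e + r + c).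
{ apply Rle_trans with (c * (1 + (e + 1 - 1) * (p - 1) / (s - 1))).
  - apply Rmult_le_compat_l; lra.
  - replace (c * (1 + (e + 1 - 1) * (p - 1) / (s - 1)))
      with (c + e * (c * (p - 1)) / (s - 1)) by (field; lra).
    rewrite Hcp.
    replace (c + e * (q * (s - 1) + r) / (s - 1)) with (c + q * e + r * (e / (s - 1)))
      by (field; lra).
    assert (e / (s - 1) <= 1) by (apply div01; lra).
    nra. }
assert (K : c * Rpower ((e + 1) * S) a <= P * (q * e + r + c)).
{ rewrite RNn. replace (c * (Rpower (e + 1) a * P)) with ((c * Rpower (e + 1) a) * P) by ring.
  rewrite (Rmult_comm P). apply Rmult_le_compat_r; lra. }
assert (Fm := Fmono a ((e + 1) * S) (s * S) Ha ltac:(nra) ltac:(nra)).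
rewrite RNm in Fm K. rewrite RNn in Fm K.
assert (X0 := rpow_pos (s * S - 1) a). assert (Y0 := rpow_pos ((e + 1) * S - 1) a).
set X := Rpower (s * S - 1) a in X0 Fm *. set Y := Rpower ((e + 1) * S - 1) a in Y0 Fm *.
apply div_le; [exact X0|exact Y0|].
replace ((P * p * c - c) * Y) with (c * ((p * P - 1) * Y)) by ring.
apply Rle_trans with (c * ((Rpower (e + 1) a * P - 1) * X)).
- apply Rmult_le_compat_l; lra.
-
  replace (c * ((Rpower (e + 1) a * P - 1) * X)) with ((c * (Rpower (e + 1) a * P) - c) * X) by ring.
  apply Rmult_le_compat_r; lra.
Qed.

Lemma main2 a q r e : 1 <= a -> 1 <= e -> 0 <= q -> 0 <= r ->
  (q * (e + 1) + r) / Rpower (e + 1) a <= (q * e + r) / Rpower e a.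
Proof.
intros Ha He Hq Hr.
assert (E0 := rpow_pos e a).
assert (RE : Rpower (e + 1) a = Rpower ((e + 1) / e) a * Rpower e a).
{ rewrite Rpower_mult_distr; [f_equal; field; lra| |lra].
  apply Rdiv_lt_0_compat; lra. }
assert (B := bern a ((e + 1) / e) Ha ltac:(apply Rdiv_lt_0_compat; lra)).
assert (B2 : (e + 1) / e <= Rpower ((e + 1) / e) a).
{ assert (1 <= (e + 1) / e).
  { replace ((e + 1) / e) with (1 + / e) by (field; lra).
    assert (0 < / e) by (apply Rinv_0_lt_compat; lra). lra. }
  nra. }
apply div_le; [apply rpow_pos|exact E0|].
rewrite RE.
set E := Rpower e a in E0 *. set W := Rpower ((e + 1) / e) a in B2 *.
apply Rle_trans with ((q * e + r) * ((e + 1) / e * E)).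
- replace ((q * e + r) * ((e + 1) / e * E)) with ((q * e + r) * (e + 1) / e * E)
    by (field; lra).
  apply Rmult_le_compat_r; [lra|].
  replace ((q * e + r) * (e + 1) / e) with (q * (e + 1) + r + r / e) by (field; lra).
  assert (0 <= r / e) by (apply Rmult_le_pos; [lra|left; apply Rinv_0_lt_compat; lra]).
  lra.
- apply Rmult_le_compat_l; [nra|].
  apply Rmult_le_compat_r; lra.
Qed.
End RealPart.
Lemma INR_addn a b : INR (a + b) = (INR a + INR b)%R.
Proof. exact: plus_INR. Qed.
Lemma INR_muln a b : INR (a * b) = (INR a * INR b)%R.
Proof. exact: mult_INR. Qed.
Lemma INR_subn a b : b <= a -> INR (a - b) = (INR a - INR b)%R.
Proof. move/leP => h; exact: minus_INR. Qed.

Lemma nk_add1 s e k : 1 <= s -> nk s e k + 1 = e.+1 * s ^ k.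
Proof. move=> s1; rewrite /nk powE. have : 1 <= expn s k by rewrite expn_gt0 s1. lia. Qed.

Section Fin.
Open Scope R_scope.

Lemma nk_INR s e k : (1 <= s)%nat -> INR (nk s e k) = (INR e + 1) * INR s ^ k - 1.
Proof.
move=> s1.
have h := @nk_add1 s e k s1.
have := congr1 INR h. rewrite INR_addn INR_muln pow_INR INR_1 S_INR. lra.
Qed.

Lemma a_eq q r p e k : (2 <= q)%nat -> (r < q)%nat -> (q + r < p)%nat ->
  (1 <= e)%nat -> (e <= (sA q r p).-1)%nat ->
  let s := sA q r p in
  let al := ln (INR p) / ln (INR s) in
  let c := INR (hh q r (s - 1)) / (INR p - 1) in
  INR (a_seq q r p (nk s e k)) =
    Rpower (INR s ^ k) al * (INR q * INR e + INR r + c) - c.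
Proof.
move=> q2 rq qp e1 es s al c.
have [s2 sp] := @sA_facts q r p q2 rq qp.
have hs : (1 < s)%nat by [].
have hes : (e < s)%nat by rewrite /s; lia.
have -> : a_seq q r p (nk s e k) = T q r p s e k.
  by rewrite /a_seq -/s tl //; apply/andP.
have Hp : (1 < INR p) by apply: (lt_INR 1); apply/ltP; lia.
have Hs : (1 < INR s) by apply: (lt_INR 1); apply/ltP; lia.
have lns : 0 < ln (INR s) by rewrite -ln_1; apply: ln_increasing; lra.
have RP : Rpower (INR s ^ k) al = INR p ^ k.
  rewrite /Rpower ln_pow; last lra.
  rewrite -Rpower_pow; last lra. rewrite /Rpower /al. congr exp. field. lra.
rewrite RP.
have p0 : (0 < p)%nat by lia.
have E := @Tclosed q r p s e k hs hes p0.
have E2 := congr1 INR E.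
rewrite !INR_addn !INR_muln !pow_INR INR_subn in E2; last lia.
have Ehe : INR (hh q r e) = INR q * INR e + INR r by rewrite /hh INR_addn INR_muln.
rewrite Ehe in E2. rewrite /c.
set Tv := INR (T q r p s e k) in E2 *.
set H := INR (hh q r (s - 1)) in E2 *.
have EH : INR q * INR (s - 1) + INR r = H by rewrite /H /hh INR_addn INR_muln.
rewrite EH in E2.
apply: (Rmult_eq_reg_l (INR p - 1)); last lra.
have -> : (INR p - 1) * Tv = INR p ^ k * (INR p - 1) * (INR q * INR e + INR r) + H * INR p ^ k - H by rewrite INR_1 in E2; lra.
field. lra.
Qed.

End Fin.

Lemma nkM s k : (1 <= s)%nat -> (s ^ k.+1 - 1 = nk s s.-1 k)%nat.
Proof.
move=> s1; rewrite /nk !powE expnS.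
have : (1 <= expn s k)%nat by rewrite expn_gt0 s1.
move: (expn s k) => X X1. case: s s1 => // s' _ /=. nia.
Qed.

Section Fin2.
Open Scope R_scope.

Lemma al_facts q r p : (2 <= q)%nat -> (r < q)%nat -> (q + r < p)%nat ->
  let s := sA q r p in let al := ln (INR p) / ln (INR s) in
  1 <= al /\ Rpower (INR s) al = INR p.
Proof.
move=> q2 rq qp s al.
have [s2 sp] := @sA_facts q r p q2 rq qp.
have Hs : (1 < INR s) by apply: (lt_INR 1); apply/ltP; lia.
have lns : 0 < ln (INR s) by rewrite -ln_1; apply: ln_increasing; lra.
have sp' : INR s <= INR p by apply: le_INR; apply/leP; rewrite /s; nia.
split.
- rewrite /al. have : ln (INR s) <= ln (INR p).
    case: (Rle_lt_or_eq_dec _ _ sp') => h; last by rewrite h; lra.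
    left; apply: ln_increasing; lra.
  move=> h. apply: (Rmult_le_reg_r (ln (INR s))) => //.
  rewrite Rmult_1_l /Rdiv Rmult_assoc Rinv_l; lra.
- rewrite /Rpower /al. have -> : ln (INR p) / ln (INR s) * ln (INR s) = ln (INR p) by field; lra.
  apply: exp_ln; lra.
Qed.

Lemma b_small q r p e : (2 <= q)%nat -> (r < q)%nat -> (q + r < p)%nat ->
  (1 <= e)%nat -> (e <= (sA q r p).-1)%nat ->
  b_seq q r p e = (INR q * INR e + INR r) / Rpower (INR e) (ln (INR p) / ln (INR (sA q r p))).
Proof.
move=> q2 rq qp e1 es.
have A := @a_eq q r p e 0 q2 rq qp e1 es. cbv zeta in A.
have h : nk (sA q r p) e 0 = e by rewrite /nk /=; lia.
rewrite h /= rpow_1l in A.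
rewrite /b_seq A. congr (_ / _). ring.
Qed.

End Fin2.

Theorem mainTheorem15 (q r p : nat) :
  2 <= q -> r < q -> q + r < p ->
  (forall k eps : nat, 1 <= eps <= (sA q r p).-1 ->
     (b_seq q r p ((sA q r p) ^ k.+1 - 1)
        <= b_seq q r p (eps * (sA q r p) ^ k + (sA q r p) ^ k - 1))%R)
  /\
  (forall eps : nat, 1 <= eps -> eps.+1 <= (sA q r p).-1 ->
     (b_seq q r p eps.+1 <= b_seq q r p eps)%R).
Proof.
move=> q2 rq qp.
have [s2 sp] := @sA_facts q r p q2 rq qp.
have [al1 Rs] := @al_facts q r p q2 rq qp.
set s := sA q r p in s2 sp al1 Rs *.
set al := (ln (INR p) / ln (INR s))%R in al1 Rs *.
have Hs : (1 < INR s)%R by apply: (lt_INR 1); apply/ltP; lia.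
have Hp : (1 < INR p)%R by apply: (lt_INR 1); apply/ltP; lia.
split.
- move=> k eps /andP[e1 es].
  have s1 : 1 <= s by lia.
  rewrite (@nkM s k s1) (_ : eps * s ^ k + s ^ k - 1 = nk s eps k) //.
  have es' : s.-1 <= s.-1 by [].
  have e1' : 1 <= s.-1 by lia.
  rewrite /b_seq (@a_eq q r p eps k q2 rq qp e1 es) (@a_eq q r p s.-1 k q2 rq qp e1' es').
  rewrite !nk_INR // -/s -/al.
  set c := (INR (hh q r (s - 1)) / (INR p - 1))%R.
  have Hsm : INR s.-1 = (INR s - 1)%R by rewrite -subn1 INR_subn // INR_1.
  have Hc : (c * (INR p - 1) = INR q * (INR s - 1) + INR r)%R.
    rewrite /c /hh INR_addn INR_muln INR_subn // INR_1. field. lra.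
  have c0 : (0 <= c)%R.
    rewrite /c /Rdiv; apply: Rmult_le_pos; [exact: pos_INR|].
    left; apply: Rinv_0_lt_compat; lra.
  have S1 : (1 <= INR s ^ k)%R by apply: pow_R1_Rle; lra.
  have Ee1 : (1 <= INR eps)%R by apply: (le_INR 1); apply/leP.
  have Ee2 : (INR eps <= INR s - 1)%R by rewrite -Hsm; apply: le_INR; apply/leP.
  have M := @main1 al (INR s) (INR p) (INR q) (INR r) c (INR eps) (INR s ^ k)%R al1 Hs Rs S1 (conj Ee1 Ee2) (pos_INR q) (pos_INR r) c0 Hc.
  rewrite Hsm.
  have -> : (INR s - 1 + 1 = INR s)%R by ring.
  have -> : (INR q * (INR s - 1) + INR r + c = INR p * c)%R by lra.
  rewrite -Rmult_assoc. exact: M.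
- move=> eps e1 es.
  rewrite (@b_small q r p eps.+1 q2 rq qp) // (@b_small q r p eps q2 rq qp) //; last by lia.
  rewrite -/s -/al S_INR.
  have Ee1 : (1 <= INR eps)%R by apply: (le_INR 1); apply/leP.
  exact: (@main2 al (INR q) (INR r) (INR eps) al1 Ee1 (pos_INR q) (pos_INR r)).
Qed.
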